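(* Let $k\ge2$ and $G=\mathrm{BS}(1,k)=\langle a,t\mid tat^{-1}=a^k\rangle$. For every finite subset $A\subseteq G$ there exists $g\in G$ such that $c(gA)=|A|$, i.e. the elements of $gA$ lie in pairwise distinct conjugacy classes.
   Context: For $B\subseteq G$, $c(B)$ is the number of distinct conjugacy classes of $G$ meeting $B$. *)

(* Defs.v *)
From HB Require Import structures.
From mathcomp Require Import all_boot all_order all_algebra.
Set Implicit Arguments. Unset Strict Implicit. Unset Printing Implicit Defensive.
Import Order.TTheory GRing.Theory Num.Theory.
Local Open Scope ring_scope.

(* Model of BS(1,k) = < a, t | t a t^-1 = a^k > as the group of affine maps
   x |-> k^n x + b of Q with n : int and b in Z[1/k].
   An element (n, b) : int * rat stands for the map x |-> k^n * x + b.
   Generators: a = (0, 1) (x |-> x+1), t = (1, 0) (x |-> k x);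
   indeed t a t^-1 = (0, k) = a^k. *)

Definition BSel := (int * rat)%type.

Definition inBS (k : nat) (g : BSel) : Prop :=
  exists m : nat, g.2 * (k%:Q) ^+ m \is a Num.int.

(* group law = composition of affine maps: (g * h)(x) = g (h x) *)
Definition BSmul (k : nat) (g h : BSel) : BSel :=
  (g.1 + h.1, g.2 + (k%:Q) ^ g.1 * h.2).

Definition BSinv (k : nat) (g : BSel) : BSel :=
  (- g.1, - ((k%:Q) ^ (- g.1) * g.2)).

Definition BSa : BSel := (0%R, 1).
Definition BSt : BSel := (1%R, 0).

Definition BSconj (k : nat) (g h : BSel) : Prop :=
  exists u : BSel, inBS k u /\ BSmul k (BSmul k u g) (BSinv k u) = h.

(* Main.v *)
Require Import Defs.
From HB Require Import structures.
From mathcomp Require Import all_boot all_order all_algebra.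
From mathcomp Require Import zify ring.
Import Order.TTheory GRing.Theory Num.Theory.

Lemma core1 k L s t B1 B2 m : (2 <= k)%N -> (B1 < k ^ t)%N -> (B2 < k ^ t)%N ->
  (s < L)%N -> (L + 2 * t + 2 < 2 * s)%N -> (0 < m)%N -> (2 * m <= L)%N ->
  ~ (k ^ s + B2 = k ^ m * (k ^ s + B1) %[mod k ^ L - 1])%N.
Proof.
move=> k2 hB1 hB2 hsL hs m0 hm.
have k0 : (0 < k)%N by lia.
have Hle : forall a b, (a <= b)%N -> (k ^ a <= k ^ b)%N by move=> a b; exact: leq_pexp2l.
have H2 : forall a, (2 * k ^ a <= k ^ a.+1)%N by move=> a; rewrite expnS leq_mul2r k2 orbT.
have kp : forall a, (0 < k ^ a)%N by move=> a; rewrite expn_gt0 k0.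
have kmB : (k ^ m * B1 < k ^ (m + t))%N by rewrite expnD ltn_pmul2l.
have hts : (k ^ t.+1 <= k ^ s)%N by apply: Hle; lia.
have hsL1 : (k ^ s.+1 <= k ^ L)%N by apply: Hle; lia.
have e1 := H2 t; have e2 := H2 s.
have wM : (k ^ s + B2 < k ^ L - 1)%N by lia.
case: (ltnP (s + m) L) => hsm.
- have h1 : (k ^ (s + m) <= k ^ (L.-1))%N by apply: Hle; lia.
  have h2 : (k ^ (m + t) <= k ^ (L.-2))%N by apply: Hle; lia.
  have e3 : (2 * k ^ L.-1 <= k ^ L)%N by have := H2 L.-1; rewrite prednK //; lia.
  have e4 : (2 * k ^ L.-2 <= k ^ L.-1)%N by have := H2 L.-2; rewrite prednK //; lia.
  have h5 := kp L.-2.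
  have e5 : (k ^ m * (k ^ s + B1) = k ^ (s + m) + k ^ m * B1)%N by rewrite mulnDr -expnD (addnC m s).
  have h6 : (k ^ s.+1 <= k ^ (s + m))%N by apply: Hle; lia.
  rewrite e5 !modn_small; lia.
- have e5 : (k ^ m * (k ^ s + B1) = k ^ (s + m - L) * (k ^ L - 1) + (k ^ (s + m - L) + k ^ m * B1))%N.
    have : (k ^ (s + m) = k ^ (s + m - L) * k ^ L)%N by rewrite -expnD; congr (_ ^ _); lia.
    move=> eSM; rewrite mulnDr -expnD (addnC m s) eSM.
    have := kp L; have := kp (s + m - L).
    move: (k ^ L) (k ^ (s + m - L)) => X Y hY hX.
    rewrite mulnBr muln1; nia.
  rewrite e5 modnMDl.
  have h1 : (k ^ (s + m - L) <= k ^ (s.-1))%N by apply: Hle; lia.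
  have h2 : (k ^ (m + t) <= k ^ (s.-1))%N by apply: Hle; lia.
  have e4 : (2 * k ^ s.-1 <= k ^ s)%N by have := H2 s.-1; rewrite prednK //; lia.
  rewrite !modn_small; lia.
Qed.

Lemma coreN k L s t B1 B2 m : (2 <= k)%N -> (B1 < k ^ t)%N -> (B2 < k ^ t)%N -> B1 != B2 ->
  (s < L)%N -> (L + 2 * t + 2 < 2 * s)%N ->
  ~ (k ^ s + B2 = k ^ m * (k ^ s + B1) %[mod k ^ L - 1])%N.
Proof.
move=> k2 hB1 hB2 hne hsL hs.
have k0 : (0 < k)%N by lia.
set M := (k ^ L - 1)%N.
have hts : (k ^ t.+1 <= k ^ s)%N by apply: leq_pexp2l; lia.
have hsL1 : (k ^ s.+1 <= k ^ L)%N by apply: leq_pexp2l; lia.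
have e1 : (2 * k ^ t <= k ^ t.+1)%N by rewrite expnS leq_mul2r k2 orbT.
have e2 : (2 * k ^ s <= k ^ s.+1)%N by rewrite expnS leq_mul2r k2 orbT.
have kp : forall a, (0 < k ^ a)%N by move=> a; rewrite expn_gt0 k0.
have hL1 : (k ^ L %% M = 1)%N.
  have := kp t; have := kp L => h1 h2.
  have -> : (k ^ L = 1 + M)%N by rewrite /M; lia.
  rewrite modnDr modn_small // /M; lia.
have wM : forall B, (B < k ^ t)%N -> (k ^ s + B < M)%N by move=> B hB; rewrite /M; lia.
have mulC : forall c a b, (a = b %[mod M])%N -> (c * a = c * b %[mod M])%N.
  by move=> c a b h; rewrite -modnMmr h modnMmr.
have kmod : forall q r, (k ^ (q * L + r) = k ^ r %[mod M])%N.
  by move=> q r; rewrite expnD (mulnC q L) expnM -modnMml -modnXm hL1 exp1n modnMml mul1n.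
move=> h; move: h.
rewrite {1}(divn_eq m L) -modnMml kmod modnMml.
have rL : (m %% L < L)%N by rewrite ltn_mod; lia.
set r := (m %% L)%N.
case: (posnP r) => [r0|rpos].
  rewrite r0 expn0 mul1n !modn_small ?wM // => /eqP.
  by rewrite eqn_add2l eq_sym (negbTE hne).
case: (leqP (2 * r) L) => hr.
  exact: (@core1 k L s t B1 B2 r k2 hB1 hB2 hsL hs rpos hr).
move=> h.
have h2 : (k ^ s + B1 = k ^ (L - r) * (k ^ s + B2) %[mod M])%N.
  have h3 := mulC (k ^ (L - r)) _ _ h.
  rewrite h3 mulnA -expnD subnK; last exact: ltnW.
  by rewrite -modnMml hL1 mul1n.
apply: (@core1 k L s t B2 B1 (L - r) k2 hB2 hB1 hsL hs _ _ h2).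
  by rewrite subn_gt0.
clear -hr; lia.
Qed.

Local Open Scope ring_scope.

Lemma coprime_kL (k L F : nat) : (0 < k)%N -> (0 < L)%N -> coprime (k ^ L - 1) (k ^ F).
Proof.
move=> kp L0; apply: coprimeXr.
have h : coprime (k ^ L - 1) (k ^ L).
  have kL : (0 < k ^ L)%N by rewrite expn_gt0 kp.
  by rewrite coprime_sym -{1}(prednK kL) subn1 coprimeSn.
apply: coprime_dvdr h; exact: dvdn_exp.
Qed.

Lemma ratlem (k L F m0 V1 V2 : nat) (c : rat) (Z : int) : (0 < k)%N -> (0 < L)%N ->
  c * (k%:Q) ^+ F = Z%:~R ->
  V2%:Q - (k%:Q) ^+ m0 * V1%:Q = c * ((k ^ L - 1)%N)%:Q ->
  (V2 = k ^ m0 * V1 %[mod k ^ L - 1])%N.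
Proof.
move=> kp L0 hc he.
have eq : ((k ^ F)%N%:Z * (V2%:Z - (k ^ m0 * V1)%N%:Z) = Z * (k ^ L - 1)%N%:Z)%R.
  apply: (@intr_inj rat).
  rewrite !rmorphM /= rmorphB /= -hc.
  have hh : forall n : nat, ((n%:Z)%:~R : rat) = n%:R by [].
  rewrite !hh natrM !natrX (mulrAC c) -he; ring.
have dv : ((k ^ L - 1)%N%:Z %| (V2%:Z - (k ^ m0 * V1)%N%:Z))%Z.
  rewrite -(@Gauss_dvdzr _ ((k ^ F)%N%:Z)); last by rewrite coprimezE /= coprime_kL.
  by rewrite eq dvdz_mull // dvdzz.
move: dv; rewrite -eqz_mod_dvd !modz_nat => /eqP [].
done.
Qed.

Lemma bnd (T : eqType) (f : T -> nat) (A : seq T) :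
  exists C, forall x, x \in A -> (f x <= C)%N.
Proof.
exists (\sum_(x <- A) f x)%N => x xA.
by rewrite (big_rem x xA) /= leq_addr.
Qed.

Lemma exE (k : nat) (A : seq BSel) : (forall x, x \in A -> inBS k x) ->
  exists E : nat, forall x, x \in A -> x.2 * (k%:Q) ^+ E \is a Num.int.
Proof.
elim: A => [|a A IH] hA; first by exists 0%N.
have [e he] := hA a (mem_head _ _).
have [E hE] : exists E : nat, forall x, x \in A -> x.2 * (k%:Q) ^+ E \is a Num.int.
  by apply: IH => x xA; apply: hA; rewrite inE xA orbT.
exists (e + E)%N => x; rewrite inE => /orP [/eqP ->|xA].
  by rewrite exprD mulrA; apply: rpredM => //; apply: rpredX; exact: natr_int.
by rewrite exprD mulrA mulrAC; apply: rpredM; [exact: hE | apply: rpredX; exact: natr_int].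
Qed.

Theorem corollary5p4 (k : nat) (hk : (2 <= k)%N) (A : seq BSel)
    (hA : uniq A) (hAG : forall x, x \in A -> inBS k x) :
  exists g : BSel, inBS k g /\
    (forall x y, x \in A -> y \in A -> x != y ->
       ~ BSconj k (BSmul k g x) (BSmul k g y)).
Proof.
have k0 : (0 < k)%N by lia.
have K0 : (k%:Q) != 0 by rewrite pnatr_eq0 -lt0n.
have [E hE] := @exE k A hAG.
pose X (x : BSel) := numq (x.2 * (k%:Q) ^+ E).
have hX : forall x, x \in A -> x.2 * (k%:Q) ^+ E = (X x)%:~R.
  by move=> x xA; rewrite /X numqK // hE.
have [C hC] := @bnd _ (fun x => `|X x|%N) A.
have [Nm hN] := @bnd _ (fun x : BSel => `|x.1|%N) A.
pose t := (2 * C + 1)%N.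
pose P := (3 * Nm + 2 * t + 5)%N.
pose s := (P - Nm - 1)%N.
pose D := (k ^ s + C)%N.
pose W := (k%:Q) ^+ (P + E).
have W0 : W != 0 by rewrite expf_neq0.
exists (- (P%:Z), W^-1 * D%:R); split.
  exists (P + E)%N; rewrite /= -/W mulrAC mulVf // mul1r natr_int //.
move=> x y xA yA xy [[m c]] [[f /= /intrP [z hz]]] heq.
rewrite /BSmul /BSinv /= in heq; case: heq => h1 h2.
have Pdef : P = (3 * Nm + 2 * t + 5)%N by [].
have sdef : s = (P - Nm - 1)%N by [].
have ex1 : x.1 = y.1 by move: h1; rewrite addrAC subrr add0r => /addrI.
have Lp : (`|x.1| <= Nm)%N := hN x xA.
pose L := `|P%:Z - x.1|%N.
have hL : L%:Z = P%:Z - x.1 by rewrite /L; clear -Lp Pdef; lia.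
have L0 : (0 < L)%N by clear -hL Lp Pdef; lia.
have eL : - P%:Z + x.1 = - (L%:Z) by rewrite hL; clear; lia.
pose Bf (v : BSel) := `|(C%:Z + X v)%R|%N.
have natK : forall n, ((k ^ n)%N%:R : rat) = (k%:Q) ^+ n by move=> n; rewrite natrX.
have idv : forall v, v \in A -> W^-1 * D%:R + (k%:Q) ^ (- P%:Z) * v.2 =
    W^-1 * ((k ^ s + Bf v)%N)%:R.
  move=> v vA.
  have hb : ((Bf v)%:Z = C%:Z + X v) by have := hC v vA; rewrite /Bf; clear; lia.
  have e : ((Bf v)%:R : rat) = (C%:Z + X v)%:~R by rewrite -hb.
  rewrite natrD e intrD -hX // -exprnN /W exprD /D natrD natK.
  field.
  by rewrite !expf_neq0.
rewrite idv // idv // eL expfzDr // -exprnN -invr_expz in h2.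
set Vx := (k ^ s + Bf x)%N in h2.
set Vy := (k ^ s + Bf y)%N in h2.
have Km0 : (k%:Q) ^ m != 0 := expfz_neq0 _ K0.
have KL0 : (k%:Q) ^+ L != 0 := expf_neq0 _ K0.
have eqn : (Vy%:R : rat) - (k%:Q) ^ m * Vx%:R = (c * W * ((k%:Q) ^+ L)^-1) * ((k ^ L - 1)%N)%:R.
  rewrite natrB ?expn_gt0 ?k0 // natK.
  have -> : (Vy%:R : rat) = W * (W^-1 * Vy%:R) by field.
  rewrite -h2; field.
  by rewrite KL0 Km0 W0.
have tdef : t = (2 * C + 1)%N by [].
have hbz : forall v, v \in A -> ((Bf v)%:Z = C%:Z + X v).
  by move=> v vA; have := hC v vA; rewrite /Bf; clear; lia.
have hBf : forall v, v \in A -> (Bf v <= 2 * C)%N.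
  by move=> v vA; have := hC v vA; rewrite /Bf; clear; lia.
have tk : (t < k ^ t)%N by apply: ltn_expl.
have hBx : (Bf x < k ^ t)%N by have := hBf x xA; clear -tk tdef; lia.
have hBy : (Bf y < k ^ t)%N by have := hBf y yA; clear -tk tdef; lia.
have hne : Bf x != Bf y.
  apply/eqP => eB; apply: (negP xy).
  have eX : X x = X y by have := hbz x xA; have := hbz y yA; rewrite eB; clear; lia.
  have e2 : x.2 = y.2.
    apply: (mulIf (expf_neq0 E K0)); by rewrite hX // hX // eX.
  by rewrite (surjective_pairing x) (surjective_pairing y) ex1 e2.
have hsL : (s < L)%N by clear -hL Lp Pdef sdef; lia.
have hs : (L + 2 * t + 2 < 2 * s)%N by clear -hL Lp Pdef sdef; lia.
have ci : forall n, (((k ^ n)%N%:Z)%:~R : rat) = (k%:Q) ^+ n by move=> n; rewrite -natK.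
clear h1; case: m Km0 eqn h2 => [m0|m1] Km0 eqn _.
  apply: (@coreN k L s t (Bf x) (Bf y) m0 hk hBx hBy hne hsL hs).
  apply: (@ratlem k L (f + L) m0 Vx Vy (c * W * ((k%:Q) ^+ L)^-1) (z * (k ^ (P + E))%N%:Z) k0 L0 _ eqn).
  rewrite intrM -hz ci /W !exprD; field.
  by rewrite KL0.
have e3 : (k%:Q) ^ (Negz m1) = ((k%:Q) ^+ m1.+1)^-1 by [].
have Q0 : (k%:Q) ^+ m1.+1 != 0 := expf_neq0 _ K0.
rewrite e3 in eqn.
have eqn2 : (Vx%:R : rat) - (k%:Q) ^+ m1.+1 * Vy%:R =
    (-(c * W * ((k%:Q) ^+ L)^-1 * (k%:Q) ^+ m1.+1)) * ((k ^ L - 1)%N)%:R.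
  have -> : (Vx%:R : rat) - (k%:Q) ^+ m1.+1 * Vy%:R =
      - ((k%:Q) ^+ m1.+1) * ((Vy%:R : rat) - ((k%:Q) ^+ m1.+1)^-1 * Vx%:R).
    by field.
  rewrite eqn; ring.
apply: (@coreN k L s t (Bf y) (Bf x) m1.+1 hk hBy hBx _ hsL hs); first by rewrite eq_sym.
apply: (@ratlem k L (f + L) m1.+1 Vy Vx _ (-(z * (k ^ (P + E))%N%:Z * (k ^ m1.+1)%N%:Z)) k0 L0 _ eqn2).
rewrite (intrN rat) !intrM -hz !ci /W !exprD; field.
by rewrite KL0.
Qed.
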